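(* Let $b\ge 2$ be an integer and let $w=d_1\dots d_p$ be a fixed block of $b$-ary digits of length $p\ge 1$. For each integer $k\ge 0$ let $$S_w(k)=\sum_{m}\frac1m,$$ where the sum runs over all positive integers $m$ whose minimal base-$b$ representation (the string of $b$-ary digits without leading zeros) contains exactly $k$ occurrences of $w$, counting possibly overlapping occurrences. Then for every integer $k\ge 1$, $$\Bigl|S_w(k)-b^{p}\log(b)\Bigr|\le (b-1)\,b^{\,p-\max(k,2)+1}.$$
   Context: An occurrence of $w$ in a string $X=x_1\dots x_l$ is an index $i$ with $1\le i\le l-p+1$ and $x_i x_{i+1}\dots x_{i+p-1}=w$. Different occurrences may overlap. *)

(* Defs.v *)
From Stdlib Require Import Reals Lra Lia Arith List ZArith.
From Coquelicot Require Import Coquelicot.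
Import ListNotations.
Open Scope R_scope.

(* Base-b digits of m, most significant first, without leading zeros
   (digits of 0 is the empty list).  The fuel m suffices when b >= 2. *)
Fixpoint digits_aux (b fuel m : nat) : list nat :=
  match fuel with
  | O => []
  | S f => if Nat.eqb m 0 then []
           else digits_aux b f (Nat.div m b) ++ [Nat.modulo m b]
  end.

Definition digits (b m : nat) : list nat := digits_aux b m m.

Definition occ (X w : list nat) : nat :=
  length (filter (fun i => if list_eq_dec Nat.eq_dec (firstn (length w) (skipn i X)) w
                           then true else false)
                 (seq 0 (length X + 1 - length w))).

(* n-th term (n >= 0) of the series S_w(k): corresponds to m = n+1. *)
Definition S_term (b : nat) (w : list nat) (k : nat) (n : nat) : R :=
  if Nat.eqb (occ (digits b (S n)) w) k then / INR (S n) else 0.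

(* Main.v *)
Require Import Defs.
From Stdlib Require Import Reals List ZArith.
From Coquelicot Require Import Coquelicot.
Open Scope R_scope.
From Stdlib Require Import Arith Lia Bool Lra.
Import ListNotations.
Open Scope nat_scope.
From Stdlib Require Import Arith Lia Bool.

Lemma divmod_eq (c q r : nat) : r < c -> (q * c + r) / c = q /\ (q * c + r) mod c = r.
Proof.
  intro H. assert (c <> 0) by lia. split.
  - rewrite Nat.div_add_l by lia. rewrite Nat.div_small by lia. lia.
  - rewrite Nat.add_comm, Nat.Div0.mod_add. apply Nat.mod_small; lia.
Qed.

Lemma div_pos_pow (b j : nat) : 1 <= b -> 1 <= b ^ j.
Proof. intro. induction j; simpl; nia. Qed.

Lemma div_concat (b q r j : nat) : 1 <= b -> r < b ^ j -> (q * b ^ j + r) / b ^ j = q.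
Proof. intros. apply divmod_eq; auto. Qed.

Lemma mod_concat (b q r j : nat) : 1 <= b -> r < b ^ j -> (q * b ^ j + r) mod b ^ j = r.
Proof. intros. apply divmod_eq; auto. Qed.

Lemma div_S (b x j : nat) : 1 <= b -> x / b / b ^ j = x / b ^ S j.
Proof. intro. rewrite Nat.Div0.div_div. simpl. reflexivity. Qed.

Lemma mod_S_div (b x j : nat) : 1 <= b -> (x mod b ^ S j) / b = (x / b) mod b ^ j.
Proof.
  intro Hb. simpl. rewrite Nat.Div0.mod_mul_r.
  rewrite Nat.add_comm, Nat.mul_comm, Nat.div_add_l by lia. rewrite (Nat.div_small (x mod b) b). lia.
  apply Nat.mod_upper_bound; lia.
Qed.

Lemma mod_S_mod (b x j : nat) : 1 <= b -> (x mod b ^ S j) mod b = x mod b.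
Proof.
  intro Hb. simpl. rewrite Nat.Div0.mod_mul_r.
  rewrite Nat.mul_comm, Nat.Div0.mod_add. apply Nat.Div0.mod_mod.
Qed.

Lemma concat_div_b (b q r j : nat) : 1 <= b -> (q * b ^ S j + r) / b = q * b ^ j + r / b.
Proof.
  intro Hb. replace (q * b ^ S j) with ((q * b ^ j) * b) by (simpl; ring).
  rewrite Nat.div_add_l by lia. lia.
Qed.

Lemma concat_mod_p (b p q q' r j : nat) : 1 <= b ->
  q mod b ^ p = q' mod b ^ p -> (q * b ^ j + r) mod b ^ p = (q' * b ^ j + r) mod b ^ p.
Proof.
  intros Hb H.
  rewrite (Nat.div_mod_eq q (b ^ p)), (Nat.div_mod_eq q' (b ^ p)).
  rewrite H.
  rewrite !Nat.mul_add_distr_r.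
  rewrite <- !Nat.add_assoc.
  rewrite <- !Nat.mul_assoc.
  rewrite !(Nat.mul_comm (b ^ p) (_ * b ^ j)).
  rewrite !(Nat.add_comm (_ * b ^ j * b ^ p)).
  rewrite !Nat.Div0.mod_add. reflexivity.
Qed.

Lemma concat_mod_small (b p q r j : nat) : 1 <= b -> p <= j ->
  (q * b ^ j + r) mod b ^ p = r mod b ^ p.
Proof.
  intros Hb H. replace j with ((j - p) + p) by lia. rewrite Nat.pow_add_r.
  rewrite Nat.mul_assoc, Nat.add_comm, Nat.Div0.mod_add. reflexivity.
Qed.

Definition ew (b p W x : nat) : bool := (b ^ (p - 1) <=? x) && (x mod b ^ p =? W).

Fixpoint occD_aux (b p W f m : nat) : nat :=
  match f with
  | O => O
  | S f' => if Nat.eqb m 0 then O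
            else occD_aux b p W f' (m / b) + (if ew b p W m then 1 else 0)
  end.

Definition occD (b p W m : nat) : nat := occD_aux b p W m m.

Lemma div_lt_self (b m : nat) : 2 <= b -> 1 <= m -> m / b < m.
Proof. intros. apply Nat.div_lt; lia. Qed.

Lemma occD_aux_fuel (b p W : nat) : 2 <= b -> forall f1 f2 m, m <= f1 -> m <= f2 ->
  occD_aux b p W f1 m = occD_aux b p W f2 m.
Proof.
  intros Hb f1. induction f1 as [|f1 IH]; intros f2 m H1 H2.
  - assert (m = 0) by lia. subst. destruct f2; reflexivity.
  - destruct f2 as [|f2].
    + assert (m = 0) by lia. subst. reflexivity.
    + simpl. destruct (Nat.eqb_spec m 0). reflexivity.
      f_equal. apply IH; pose proof (div_lt_self b m Hb); lia.
Qed.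

Lemma occD_0 (b p W : nat) : occD b p W 0 = 0.
Proof. reflexivity. Qed.

Lemma occD_S (b p W m : nat) : 2 <= b -> 1 <= m ->
  occD b p W m = occD b p W (m / b) + (if ew b p W m then 1 else 0).
Proof.
  intros Hb Hm. unfold occD at 1. destruct m as [|m']. lia.
  simpl occD_aux. f_equal. unfold occD.
  apply occD_aux_fuel; auto. pose proof (div_lt_self b (S m') Hb). lia.
Qed.

Lemma pow_ge1 (b j : nat) : 1 <= b -> 1 <= b ^ j.
Proof. intro. induction j; simpl; nia. Qed.

Lemma pow_mono (b i j : nat) : 1 <= b -> i <= j -> b ^ i <= b ^ j.
Proof. intros. apply Nat.pow_le_mono_r; lia. Qed.

Lemma ew_pos (b p W x : nat) : 1 <= b -> ew b p W x = true -> 1 <= x.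
Proof.
  unfold ew. intros Hb H. apply andb_prop in H as [H1 _]. apply Nat.leb_le in H1.
  pose proof (pow_ge1 b (p-1) Hb). lia.
Qed.

Lemma ew_concat (b p W q V r j : nat) : 1 <= b ->
  ew b p W q = true -> ew b p W V = true ->
  ew b p W (q * b ^ j + r) = ew b p W (V * b ^ j + r).
Proof.
  intros Hb Hq HV. unfold ew in *.
  apply andb_prop in Hq as [Hq1 Hq2]. apply andb_prop in HV as [HV1 HV2].
  apply Nat.leb_le in Hq1, HV1. apply Nat.eqb_eq in Hq2, HV2.
  pose proof (pow_ge1 b j Hb).
  assert (E1 : b ^ (p-1) <=? q * b ^ j + r = true) by (apply Nat.leb_le; nia).
  assert (E2 : b ^ (p-1) <=? V * b ^ j + r = true) by (apply Nat.leb_le; nia).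
  rewrite E1, E2. simpl.
  rewrite (concat_mod_p b p q V r j Hb). reflexivity. congruence.
Qed.

Lemma occD_concat (b p W q V r j : nat) : 2 <= b ->
  ew b p W q = true -> ew b p W V = true -> r < b ^ j ->
  occD b p W (q * b ^ j + r) + occD b p W V = occD b p W q + occD b p W (V * b ^ j + r).
Proof.
  intros Hb Hq HV. revert r. induction j as [|j IH]; intros r Hr.
  - simpl in Hr. assert (r = 0) by lia. subst. rewrite Nat.pow_0_r, !Nat.mul_1_r, !Nat.add_0_r. lia.
  - pose proof (ew_pos b p W q ltac:(lia) Hq). pose proof (ew_pos b p W V ltac:(lia) HV).
    pose proof (pow_ge1 b (S j) ltac:(lia)).
    rewrite (occD_S b p W (q * b ^ S j + r)) by nia.
    rewrite (occD_S b p W (V * b ^ S j + r)) by nia.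
    rewrite !concat_div_b by lia.
    rewrite (ew_concat b p W q V r (S j)) by (auto; lia).
    assert (r / b < b ^ j).
    { apply Nat.Div0.div_lt_upper_bound. simpl in Hr. lia. }
    specialize (IH (r / b) H2). lia.
Qed.

Fixpoint hasocc (b p W j r : nat) : bool :=
  match j with
  | O => false
  | S j' => hasocc b p W j' (r / b) || ((p <=? S j') && (r mod b ^ p =? W))
  end.

Lemma hasocc_S (b p W j r : nat) : hasocc b p W (S j) r = hasocc b p W j (r / b) || ((p <=? S j) && (r mod b ^ p =? W)).
Proof. reflexivity. Qed.

Definition bn (x : bool) : nat := if x then 1 else 0.

Lemma occD_mono (b p W q r j : nat) : 2 <= b -> 1 <= q -> r < b ^ j ->
  occD b p W q + bn (hasocc b p W j r) <= occD b p W (q * b ^ j + r).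
Proof.
  intros Hb Hq. revert r. induction j as [|j IH]; intros r Hr.
  - simpl in Hr. assert (r = 0) by lia. subst. rewrite Nat.pow_0_r, Nat.mul_1_r, Nat.add_0_r.
    cbn [hasocc bn]. rewrite !Nat.add_0_r. lia.
  - pose proof (pow_ge1 b (S j) ltac:(lia)).
    rewrite (occD_S b p W (q * b ^ S j + r)) by nia.
    rewrite !concat_div_b by lia.
    assert (r / b < b ^ j).
    { apply Nat.Div0.div_lt_upper_bound. simpl in Hr. lia. }
    specialize (IH (r / b) H0).
    simpl hasocc. unfold bn in *.
    destruct (hasocc b p W j (r / b)); cbn [orb andb].
    + destruct (ew b p W (q * b ^ S j + r)); lia.
    + destruct (p <=? S j) eqn:E1; cbn [orb andb]; [|destruct (ew _ _ _ _); lia].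
      destruct (r mod b ^ p =? W) eqn:E2; [|destruct (ew _ _ _ _); lia].
      apply Nat.leb_le in E1. apply Nat.eqb_eq in E2.
      assert (ew b p W (q * b ^ S j + r) = true).
      { unfold ew. apply andb_true_intro. split.
        - apply Nat.leb_le. pose proof (pow_mono b (p-1) (S j) ltac:(lia) ltac:(lia)). nia.
        - apply Nat.eqb_eq. rewrite concat_mod_small by lia. auto. }
      match goal with H : ew _ _ _ _ = true |- _ => rewrite H end. lia.
Qed.

Lemma occD_mono0 (b p W q r j : nat) : 2 <= b -> 1 <= q -> r < b ^ j ->
  occD b p W q <= occD b p W (q * b ^ j + r).
Proof. intros. pose proof (occD_mono b p W q r j H H0 H1). lia. Qed.

Lemma occD_lower (b p W : nat) : 2 <= b -> forall q k, k + 1 <= occD b p W q -> b ^ (p - 1 + k) <= q.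
Proof.
  intros Hb q. induction q as [q IH] using lt_wf_ind. intros k Hk.
  destruct (Nat.eq_dec q 0). subst. rewrite occD_0 in Hk. lia.
  rewrite occD_S in Hk by lia.
  pose proof (div_lt_self b q Hb ltac:(lia)).
  destruct (ew b p W q) eqn:E.
  - destruct k as [|k].
    + unfold ew in E. apply andb_prop in E as [E _]. apply Nat.leb_le in E.
      rewrite Nat.add_0_r. auto.
    + specialize (IH (q / b) H (k) ltac:(lia)).
      replace (p - 1 + S k) with (S (p - 1 + k)) by lia. simpl.
      pose proof (Nat.Div0.mul_div_le q b). nia.
  - destruct k as [|k].
    + specialize (IH (q / b) H 0 ltac:(lia)).
      rewrite Nat.add_0_r in *. pose proof (Nat.Div0.mul_div_le q b). nia.
    + specialize (IH (q / b) H (S k) ltac:(lia)).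
      lia.
Qed.

(* step lemma for the "no new occurrence" condition *)
Lemma Rstep (b p W V m j : nat) : 2 <= b -> ew b p W V = true ->
  (m / b ^ S j) mod b ^ p = W ->
  (occD b p W (V * b ^ S j + m mod b ^ S j) =? occD b p W V) =
  ((occD b p W (V * b ^ j + (m / b) mod b ^ j) =? occD b p W V) && negb (m mod b ^ p =? W))%bool.
Proof.
  intros Hb HV Hq.
  pose proof (ew_pos b p W V ltac:(lia) HV).
  pose proof (pow_ge1 b (S j) ltac:(lia)).
  rewrite (occD_S b p W (V * b ^ S j + m mod b ^ S j)) by nia.
  rewrite concat_div_b by lia. rewrite mod_S_div by lia.
  assert (Hew : ew b p W (V * b ^ S j + m mod b ^ S j) = (m mod b ^ p =? W)).
  { unfold ew in *. apply andb_prop in HV as [HV1 HV2]. apply Nat.leb_le in HV1. apply Nat.eqb_eq in HV2.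
    assert (E1 : b ^ (p-1) <=? V * b ^ S j + m mod b ^ S j = true) by (apply Nat.leb_le; nia).
    rewrite E1, andb_true_l.
    rewrite (concat_mod_p b p V (m / b ^ S j) (m mod b ^ S j) (S j)) by (auto; lia || congruence).
    rewrite Nat.mul_comm. rewrite <- Nat.div_mod_eq. reflexivity. }
  rewrite Hew.
  assert ((m / b) mod b ^ j < b ^ j) by (apply Nat.mod_upper_bound; pose proof (pow_ge1 b j ltac:(lia)); lia).
  pose proof (occD_mono0 b p W V ((m / b) mod b ^ j) j Hb H H1).
  destruct (m mod b ^ p =? W); simpl.
  - rewrite andb_false_r. apply Nat.eqb_neq. lia.
  - rewrite andb_true_r. rewrite Nat.add_0_r. reflexivity.
Qed.

From Stdlib Require Import Reals Lra.
Open Scope R_scope.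

Fixpoint sumR (f : nat -> R) (n : nat) : R :=
  match n with O => 0 | S n' => sumR f n' + f n' end.

Lemma sumR_S f n : sumR f (S n) = sumR f n + f n.
Proof. reflexivity. Qed.

Definition ir (x : bool) : R := if x then 1 else 0.

Lemma sumR_shift f n : sumR f (S n) = f O + sumR (fun i => f (S i)) n.
Proof. induction n; simpl in *. lra. rewrite IHn. lra. Qed.

Lemma sumR_ext f g n : (forall i, (i < n)%nat -> f i = g i) -> sumR f n = sumR g n.
Proof. induction n; intros H; simpl. lra. rewrite IHn, H. lra. lia. intros; apply H; lia. Qed.

Lemma sumR_plus f g n : sumR (fun i => f i + g i) n = sumR f n + sumR g n.
Proof. induction n; simpl. lra. rewrite IHn. lra. Qed.

Lemma sumR_scal c f n : sumR (fun i => c * f i) n = c * sumR f n.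
Proof. induction n; simpl. lra. rewrite IHn. lra. Qed.

Lemma sumR_le f g n : (forall i, (i < n)%nat -> f i <= g i) -> sumR f n <= sumR g n.
Proof. induction n; intros H; simpl. lra. assert (f n <= g n) by (apply H; lia).
  assert (sumR f n <= sumR g n) by (apply IHn; intros; apply H; lia). lra. Qed.

Lemma sumR_nonneg f n : (forall i, (i < n)%nat -> 0 <= f i) -> 0 <= sumR f n.
Proof. intros. replace 0 with (sumR (fun _ => 0) n). apply sumR_le; auto.
  induction n; simpl; auto. rewrite IHn. lra. intros; apply H; lia. Qed.

Lemma sumR_zero n : sumR (fun _ => 0) n = 0.
Proof. induction n; simpl; auto. rewrite IHn. lra. Qed.

Lemma sumR_swap f n m : sumR (fun i => sumR (fun j => f i j) m) n = sumR (fun j => sumR (fun i => f i j) n) m.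
Proof.
  induction n; simpl. rewrite sumR_zero. auto.
  rewrite IHn. rewrite <- sumR_plus. reflexivity.
Qed.

Lemma sumR_split f n m : sumR f (n + m) = sumR f n + sumR (fun i => f (n + i)%nat) m.
Proof. induction m; simpl. rewrite Nat.add_0_r. lra. rewrite Nat.add_succ_r. simpl. rewrite IHm. lra. Qed.

Lemma sumR_regroup g B c : sumR g (B * c) = sumR (fun q => sumR (fun r => g (q * c + r)%nat) c) B.
Proof.
  induction B; simpl. auto. rewrite <- IHB.
  replace (c + B * c)%nat with (B * c + c)%nat by lia. rewrite sumR_split. reflexivity.
Qed.

Lemma sumR_mono f n m : (forall i, 0 <= f i) -> (n <= m)%nat -> sumR f n <= sumR f m.
Proof.
  intros H Hnm. replace m with (n + (m - n))%nat by lia. rewrite sumR_split.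
  assert (0 <= sumR (fun i => f (n + i)%nat) (m - n)) by (apply sumR_nonneg; auto). lra.
Qed.

Lemma ir_nonneg x : 0 <= ir x.
Proof. destruct x; simpl; lra. Qed.

Lemma ir_le1 x : ir x <= 1.
Proof. destruct x; simpl; lra. Qed.


Lemma ir_andb x y : ir (x && y) = ir x * ir y.
Proof. destruct x, y; simpl; lra. Qed.

Lemma ew_0 (b p W : nat) : (1 <= b)%nat -> ew b p W 0 = false.
Proof. intros. unfold ew. pose proof (pow_ge1 b (p-1) H).
  destruct (Nat.leb_spec (b ^ (p-1)) 0). lia. reflexivity. Qed.

Lemma ew_ge (b p W m q : nat) : (q <= m)%nat -> ew b p W q = true -> ew b p W m = (m mod b ^ p =? W).
Proof. unfold ew. intros H E. apply andb_prop in E as [E _]. apply Nat.leb_le in E.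
  destruct (Nat.leb_spec (b ^ (p-1)) m). reflexivity. lia. Qed.

Lemma div_pow_S (b m j : nat) : (1 <= b)%nat -> (m / b ^ S j = m / b / b ^ j)%nat.
Proof. intros. rewrite div_S; auto. Qed.

Lemma div_le_self (m c : nat) : (m / c <= m)%nat.
Proof. destruct c. simpl. lia. apply Nat.Div0.div_le_upper_bound. nia. Qed.

Lemma dec1 (b p W V k : nat) : (2 <= b)%nat -> (1 <= k)%nat -> ew b p W V = true ->
  forall J m, (m < b ^ J)%nat ->
  sumR (fun j => ir (ew b p W (m / b ^ j) && (occD b p W (m / b ^ j) =? k)
        && (occD b p W (V * b ^ j + m mod b ^ j) =? occD b p W V))) J
  = ir (occD b p W m =? k).
Proof.
  intros Hb Hk HV J. induction J as [|J IH]; intros m Hm.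
  - simpl in Hm. assert (m = 0%nat) by lia. subst. simpl.
    destruct k. lia. simpl. lra.
  - rewrite sumR_shift. rewrite Nat.pow_0_r, Nat.div_1_r, Nat.mod_1_r, Nat.mul_1_r, Nat.add_0_r,
      Nat.eqb_refl, andb_true_r.
    assert (E : forall j, ew b p W (m / b ^ S j) && (occD b p W (m / b ^ S j) =? k)
        && (occD b p W (V * b ^ S j + m mod b ^ S j) =? occD b p W V)
        = (ew b p W (m / b / b ^ j) && (occD b p W (m / b / b ^ j) =? k)
        && (occD b p W (V * b ^ j + (m / b) mod b ^ j) =? occD b p W V)) && negb (ew b p W m)).
    { intro j. rewrite <- div_pow_S by lia.
      destruct (ew b p W (m / b ^ S j)) eqn:Eq; [|reflexivity].
      rewrite (ew_ge b p W m (m / b ^ S j)) by (auto; apply div_le_self).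
      rewrite Rstep; auto. 2: { unfold ew in Eq. apply andb_prop in Eq as [_ Eq]. apply Nat.eqb_eq; auto. }
      simpl. rewrite andb_assoc. reflexivity. }
    rewrite (sumR_ext _ (fun j => ir (ew b p W (m / b / b ^ j) && (occD b p W (m / b / b ^ j) =? k)
        && (occD b p W (V * b ^ j + (m / b) mod b ^ j) =? occD b p W V)) * ir (negb (ew b p W m)))).
    2: { intros i _. rewrite E. apply ir_andb. }
    rewrite (sumR_ext _ (fun j => ir (negb (ew b p W m)) * ir (ew b p W (m / b / b ^ j) && (occD b p W (m / b / b ^ j) =? k)
        && (occD b p W (V * b ^ j + (m / b) mod b ^ j) =? occD b p W V)))).
    2: { intros; lra. }
    rewrite sumR_scal. rewrite IH.
    2: { apply Nat.Div0.div_lt_upper_bound. simpl in Hm. lia. }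
    destruct (Nat.eq_dec m 0).
    + subst. rewrite ew_0 by lia. rewrite Nat.Div0.div_0_l, occD_0. destruct k; [lia|]. simpl. lra.
    + rewrite (occD_S b p W m) by lia. unfold bn.
      destruct (ew b p W m); simpl; rewrite ?Nat.add_0_r; rewrite ?andb_true_r; simpl; lra.
Qed.

Lemma dec2 (b p W k : nat) : (2 <= b)%nat -> (1 <= k)%nat ->
  forall J m, (m < b ^ J)%nat ->
  sumR (fun j => ir (ew b p W (m / b ^ j) && (occD b p W (m / b ^ j) =? k))) J
  = ir (k <=? occD b p W m).
Proof.
  intros Hb Hk J. induction J as [|J IH]; intros m Hm.
  - simpl in Hm. assert (m = 0%nat) by lia. subst. simpl.
    destruct k. lia. simpl. lra.
  - rewrite sumR_shift. rewrite Nat.pow_0_r, Nat.div_1_r.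
    rewrite (sumR_ext _ (fun j => ir (ew b p W (m / b / b ^ j) && (occD b p W (m / b / b ^ j) =? k)))).
    2: { intros i _. rewrite <- div_pow_S by lia. reflexivity. }
    rewrite IH. 2: { apply Nat.Div0.div_lt_upper_bound. simpl in Hm. lia. }
    destruct (Nat.eq_dec m 0).
    + subst. rewrite ew_0 by lia. rewrite Nat.Div0.div_0_l, occD_0. destruct k; [lia|]. simpl. lra.
    + rewrite (occD_S b p W m) by lia. unfold bn.
      destruct (ew b p W m); simpl; rewrite ?Nat.add_0_r.
      * destruct (Nat.eqb_spec (occD b p W (m / b) + 1) k);
        destruct (Nat.leb_spec k (occD b p W (m / b)));
        destruct (Nat.leb_spec k (occD b p W (m / b) + 1)); simpl; try lra; lia.
      * lra.
Qed.

Lemma hasocc_p (b p W L x : nat) : hasocc b p W L x = true -> (p <= L)%nat.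
Proof.
  revert x. induction L; intros x H; simpl in H. discriminate.
  apply orb_prop in H as [H|H]. apply IHL in H. lia.
  apply andb_prop in H as [H _]. apply Nat.leb_le in H. lia.
Qed.

Lemma dec3 (b p W V : nat) : (2 <= b)%nat -> ew b p W V = true ->
  forall L r,
  sumR (fun j => ir ((p + j <=? L) && ((r / b ^ j) mod b ^ p =? W)
        && (occD b p W (V * b ^ j + r mod b ^ j) =? occD b p W V))) L
  = ir (hasocc b p W L r).
Proof.
  intros Hb HV L. induction L as [|L IH]; intros r.
  - simpl. lra.
  - rewrite sumR_shift. rewrite Nat.pow_0_r, Nat.div_1_r, Nat.mod_1_r, Nat.mul_1_r, !Nat.add_0_r,
      Nat.eqb_refl, andb_true_r.
    assert (E : forall j, (p + S j <=? S L) && ((r / b ^ S j) mod b ^ p =? W)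
        && (occD b p W (V * b ^ S j + r mod b ^ S j) =? occD b p W V)
        = ((p + j <=? L) && ((r / b / b ^ j) mod b ^ p =? W)
        && (occD b p W (V * b ^ j + (r / b) mod b ^ j) =? occD b p W V)) && negb (r mod b ^ p =? W)).
    { intro j. rewrite <- div_pow_S by lia.
      replace (p + S j <=? S L) with (p + j <=? L).
      2: { destruct (Nat.leb_spec (p + j) L); destruct (Nat.leb_spec (p + S j) (S L)); auto; lia. }
      destruct ((r / b ^ S j) mod b ^ p =? W) eqn:Eq; [|rewrite !andb_false_r; reflexivity].
      apply Nat.eqb_eq in Eq.
      rewrite Rstep; auto. rewrite !andb_true_r. rewrite andb_assoc. reflexivity. }
    rewrite (sumR_ext _ (fun j => ir (negb (r mod b ^ p =? W)) * ir ((p + j <=? L) && ((r / b / b ^ j) mod b ^ p =? W)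
        && (occD b p W (V * b ^ j + (r / b) mod b ^ j) =? occD b p W V)))).
    2: { intros i _. rewrite E. rewrite ir_andb. lra. }
    rewrite sumR_scal. rewrite IH. simpl hasocc.
    destruct (Nat.leb_spec p (S L)).
    + destruct (r mod b ^ p =? W); destruct (hasocc b p W L (r / b)); simpl; lra.
    + destruct (hasocc b p W L (r / b)) eqn:Eh.
      * apply hasocc_p in Eh. lia.
      * simpl. lra.
Qed.

Lemma sumR_const c n : sumR (fun _ => c) n = INR n * c.
Proof. induction n; simpl sumR. simpl. lra. rewrite IHn, S_INR. lra. Qed.

Lemma sum_ind_eq n W : (W < n)%nat -> sumR (fun v => ir (v =? W)) n = 1.
Proof.
  induction n; intros H. lia. simpl sumR.
  destruct (Nat.eq_dec W n).
  - subst. rewrite Nat.eqb_refl. rewrite (sumR_ext _ (fun _ => 0)). rewrite sumR_zero. simpl; lra.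
    intros i Hi. destruct (Nat.eqb_spec i n). lia. reflexivity.
  - rewrite IHn by lia. destruct (Nat.eqb_spec n W). lia. simpl. lra.
Qed.

Lemma count_modW (b p W n : nat) : (1 <= b)%nat -> (W < b ^ p)%nat -> (p <= n)%nat ->
  sumR (fun x => ir (x mod b ^ p =? W)) (b ^ n) = INR (b ^ (n - p)).
Proof.
  intros Hb HW Hn. replace (b ^ n)%nat with (b ^ (n - p) * b ^ p)%nat.
  2: { rewrite <- Nat.pow_add_r. f_equal. lia. }
  rewrite sumR_regroup.
  rewrite (sumR_ext _ (fun _ => 1)). rewrite sumR_const. lra.
  intros q _. rewrite (sumR_ext _ (fun v => ir (v =? W))). apply sum_ind_eq; auto.
  intros v Hv. rewrite mod_concat; auto.
Qed.

Definition a_j (b p W V j : nat) : R :=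
  sumR (fun y => ir (occD b p W (V * b ^ j + y) =? occD b p W V)) (b ^ j).

Lemma Kac_count (b p W V L : nat) : (2 <= b)%nat -> (W < b ^ p)%nat -> ew b p W V = true ->
  sumR (fun r => ir (hasocc b p W L r)) (b ^ L) =
  sumR (fun j => ir (p + j <=? L) * INR (b ^ (L - j - p)) * a_j b p W V j) L.
Proof.
  intros Hb HW HV.
  rewrite (sumR_ext _ (fun r => sumR (fun j => ir ((p + j <=? L) && ((r / b ^ j) mod b ^ p =? W)
        && (occD b p W (V * b ^ j + r mod b ^ j) =? occD b p W V))) L)).
  2: { intros r _. rewrite dec3; auto. }
  rewrite sumR_swap. apply sumR_ext. intros j Hj.
  replace (b ^ L)%nat with (b ^ (L - j) * b ^ j)%nat.
  2: { rewrite <- Nat.pow_add_r. f_equal. lia. }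
  rewrite sumR_regroup.
  assert (Hbj : (1 <= b ^ j)%nat) by (apply pow_ge1; lia).
  rewrite (sumR_ext _ (fun x => ir (p + j <=? L) * ir (x mod b ^ p =? W) * a_j b p W V j)).
  2: { intros x _. unfold a_j. rewrite <- sumR_scal. apply sumR_ext. intros y Hy.
       rewrite div_concat, mod_concat by lia. rewrite !ir_andb. lra. }
  destruct (Nat.leb_spec (p + j) L).
  - rewrite (sumR_ext _ (fun x => a_j b p W V j * ir (x mod b ^ p =? W))).
    2: { intros; simpl ir; lra. }
    rewrite sumR_scal. rewrite count_modW by lia. simpl ir. lra.
  - simpl ir. rewrite (sumR_ext _ (fun _ => 0)). rewrite sumR_zero. lra. intros; lra.
Qed.

Definition Zs (b p W L : nat) : R := sumR (fun r => ir (negb (hasocc b p W L r))) (b ^ L).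

Lemma Z_total (b p W L : nat) : Zs b p W L + sumR (fun r => ir (hasocc b p W L r)) (b ^ L) = INR (b ^ L).
Proof.
  unfold Zs. rewrite <- sumR_plus. rewrite (sumR_ext _ (fun _ => 1)). rewrite sumR_const. lra.
  intros. destruct (hasocc b p W L i); simpl; lra.
Qed.

Lemma Zs_nonneg b p W L : 0 <= Zs b p W L.
Proof. apply sumR_nonneg. intros. apply ir_nonneg. Qed.

Lemma Z_step1 (b p W L : nat) : (1 <= b)%nat -> Zs b p W (S L) <= INR b * Zs b p W L.
Proof.
  intro Hb. unfold Zs. rewrite Nat.pow_succ_r by lia. rewrite Nat.mul_comm.
  rewrite sumR_regroup.
  rewrite <- (Rmult_comm (sumR _ _)). rewrite <- (Rmult_comm (INR b)).
  rewrite <- sumR_scal.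
  apply sumR_le. intros x _.
  rewrite <- sumR_const.
  apply sumR_le. intros y Hy. simpl hasocc.
  replace ((x * b + y) / b)%nat with x.
  2: { symmetry. pose proof (div_concat b x y 1 Hb). rewrite Nat.pow_1_r in H. apply H. lia. }
  destruct (hasocc b p W L x); simpl; try lra; apply ir_le1.
Qed.

Lemma hasocc_concat (b p W : nat) : (1 <= b)%nat -> forall j l x y, (y < b ^ j)%nat ->
  hasocc b p W l x = true -> hasocc b p W (l + j) (x * b ^ j + y) = true.
Proof.
  intros Hb j. induction j as [|j IH]; intros l x y Hy H.
  - simpl in Hy. assert (y = 0%nat) by lia. subst. rewrite Nat.add_0_r, Nat.pow_0_r, Nat.mul_1_r, Nat.add_0_r. auto.
  - rewrite Nat.add_succ_r. rewrite hasocc_S. rewrite concat_div_b by lia.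
    rewrite IH; auto. apply Nat.Div0.div_lt_upper_bound. simpl in Hy. lia.
Qed.

Lemma Z_stepp (b p W n : nat) : (1 <= b)%nat -> (1 <= p)%nat -> (W < b ^ p)%nat ->
  Zs b p W (n + p) <= (INR (b ^ p) - 1) * Zs b p W n.
Proof.
  intros Hb Hp HW. unfold Zs. rewrite Nat.pow_add_r.
  rewrite sumR_regroup.
  rewrite <- sumR_scal.
  apply sumR_le. intros x _.
  assert (Hs : sumR (fun y => ir (negb (y =? W))) (b ^ p) = INR (b ^ p) - 1).
  { rewrite (sumR_ext _ (fun y => 1 - ir (y =? W))).
    2: { intros. destruct (_ =? _); simpl; lra. }
    rewrite (sumR_ext _ (fun y => 1 + (-1) * ir (y =? W))) by (intros; lra).
    rewrite sumR_plus, sumR_scal, sumR_const, sum_ind_eq by auto. lra. }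
  rewrite <- Hs. rewrite Rmult_comm, <- sumR_scal.
  apply sumR_le. intros y Hy.
  destruct (hasocc b p W n x) eqn:E1.
  - rewrite (hasocc_concat b p W Hb p n x y Hy E1). simpl. rewrite Rmult_0_l. lra.
  - destruct (Nat.eqb_spec y W).
    + subst. replace (n + p)%nat with (S (n + p - 1)) by lia.
      rewrite hasocc_S. replace (S (n + p - 1)) with (n + p)%nat by lia.
      rewrite mod_concat by lia.
      assert ((p <=? n + p) = true) by (apply Nat.leb_le; lia). rewrite H, Nat.eqb_refl.
      rewrite orb_true_r. simpl. lra.
    + pose proof (ir_le1 (negb (hasocc b p W (n + p) (x * b ^ p + y)))). simpl. lra.
Qed.

Lemma INR_b_ge2 (b : nat) : (2 <= b)%nat -> 2 <= INR b.
Proof. intro. apply (le_INR 2) in H. simpl in H. lra. Qed.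

Lemma Bpow_pos (b n : nat) : (2 <= b)%nat -> 0 < INR b ^ n.
Proof. intro. apply pow_lt. pose proof (INR_b_ge2 b H). lra. Qed.

Lemma Zs0 (b p W : nat) : Zs b p W 0 = 1.
Proof. unfold Zs. simpl. lra. Qed.

Lemma Zs_tp (b p W t : nat) : (1 <= b)%nat -> (1 <= p)%nat -> (W < b ^ p)%nat ->
  Zs b p W (t * p) <= (INR (b ^ p) - 1) ^ t.
Proof.
  intros Hb Hp HW. induction t.
  - simpl. rewrite Zs0. lra.
  - replace (S t * p)%nat with (t * p + p)%nat by lia.
    eapply Rle_trans. apply Z_stepp; auto.
    assert (1 <= INR (b ^ p)) by (apply (le_INR 1); apply pow_ge1; auto).
    simpl. apply Rmult_le_compat_l; lra.
Qed.

Definition zeta (b p W L : nat) : R := Zs b p W L / INR b ^ L.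

Lemma zeta_nonneg b p W L : (2 <= b)%nat -> 0 <= zeta b p W L.
Proof. intro. unfold zeta. apply Rmult_le_pos. apply Zs_nonneg.
  left. apply Rinv_0_lt_compat. apply Bpow_pos; auto. Qed.

Lemma zeta_S b p W L : (2 <= b)%nat -> zeta b p W (S L) <= zeta b p W L.
Proof.
  intro Hb. unfold zeta. pose proof (Z_step1 b p W L ltac:(lia)).
  pose proof (Bpow_pos b L Hb). pose proof (INR_b_ge2 b Hb).
  simpl pow.
  apply Rle_trans with (INR b * Zs b p W L / (INR b * INR b ^ L)).
  - unfold Rdiv. apply Rmult_le_compat_r. left. apply Rinv_0_lt_compat. nra. auto.
  - right. field. lra.
Qed.

Lemma zeta_anti b p W L L' : (2 <= b)%nat -> (L <= L')%nat -> zeta b p W L' <= zeta b p W L.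
Proof.
  intros Hb H. induction H. lra. eapply Rle_trans. apply zeta_S; auto. auto.
Qed.

Lemma Rpow_div_distr (x y : R) (t : nat) : y <> 0 -> (x / y) ^ t = x ^ t / y ^ t.
Proof. intro. induction t; simpl. field. rewrite IHt. field. split; auto. apply pow_nonzero; auto. Qed.

Lemma zeta_tp b p W t : (2 <= b)%nat -> (1 <= p)%nat -> (W < b ^ p)%nat ->
  zeta b p W (t * p) <= (1 - / INR b ^ p) ^ t.
Proof.
  intros Hb Hp HW. unfold zeta.
  pose proof (Bpow_pos b p Hb).
  replace (1 - / INR b ^ p) with ((INR b ^ p - 1) / INR b ^ p) by (field; lra).
  rewrite Rpow_div_distr by lra. rewrite Nat.mul_comm, pow_mult.
  unfold Rdiv. apply Rmult_le_compat_r. left. apply Rinv_0_lt_compat. apply pow_lt. auto.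
  rewrite <- pow_INR. rewrite (Nat.mul_comm p t). apply Zs_tp; auto; lia.
Qed.

Lemma zeta_small b p W : (2 <= b)%nat -> (1 <= p)%nat -> (W < b ^ p)%nat ->
  forall eta, 0 < eta -> exists L0, forall L, (L0 <= L)%nat -> zeta b p W L <= eta.
Proof.
  intros Hb Hp HW eta Heta.
  pose proof (Bpow_pos b p Hb).
  assert (1 <= INR b ^ p).
  { rewrite <- pow_INR. apply (le_INR 1). apply pow_ge1. lia. }
  assert (Hx : Rabs (1 - / INR b ^ p) < 1).
  { assert (0 < / INR b ^ p <= 1).
    { split. apply Rinv_0_lt_compat; auto. rewrite <- Rinv_1. apply Rinv_le_contravar; lra. }
    rewrite Rabs_right; lra. }
  destruct (pow_lt_1_zero _ Hx eta Heta) as [N HN].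
  exists (N * p)%nat. intros L HL.
  eapply Rle_trans. apply zeta_anti; eauto.
  eapply Rle_trans. apply zeta_tp; auto.
  specialize (HN N ltac:(lia)). pose proof (Rle_abs ((1 - / INR b ^ p) ^ N)). lra.
Qed.

Definition cS (b p W V n : nat) : R := sumR (fun j => a_j b p W V j / INR b ^ j) n.

Lemma a_j_nonneg b p W V j : 0 <= a_j b p W V j.
Proof. apply sumR_nonneg. intros. apply ir_nonneg. Qed.

Lemma Kac_c (b p W V n : nat) : (2 <= b)%nat -> (1 <= p)%nat -> (W < b ^ p)%nat -> ew b p W V = true ->
  cS b p W V n = INR b ^ p * (1 - zeta b p W (n + p - 1)).
Proof.
  intros Hb Hp HW HV.
  set (L := (n + p - 1)%nat).
  pose proof (Z_total b p W L) as HT. rewrite (Kac_count b p W V L) in HT; auto.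
  assert (Hs : forall f, sumR f L = sumR f n + sumR (fun i => f (n + i)%nat) (p - 1)).
  { intros. unfold L. replace (n + p - 1)%nat with (n + (p - 1))%nat by lia. apply sumR_split. }
  rewrite Hs in HT.
  rewrite (sumR_ext (fun i => ir (p + (n + i) <=? L) * INR (b ^ (L - (n + i) - p)) * a_j b p W V (n + i)) (fun _ => 0)) in HT.
  2: { intros i Hi. destruct (Nat.leb_spec (p + (n + i)) L). unfold L in *; lia. simpl. lra. }
  rewrite sumR_zero in HT.
  rewrite (sumR_ext _ (fun j => INR b ^ L / INR b ^ p * (a_j b p W V j / INR b ^ j))) in HT.
  2: { intros j Hj. destruct (Nat.leb_spec (p + j) L). 2: unfold L in *; lia.
       rewrite pow_INR. replace L with ((L - j - p) + j + p)%nat at 2 by lia.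
       rewrite !pow_add. simpl ir. pose proof (Bpow_pos b j Hb). pose proof (Bpow_pos b p Hb).
       field. lra. }
  rewrite sumR_scal in HT. fold (cS b p W V n) in HT.
  unfold zeta. fold L. rewrite pow_INR in HT.
  pose proof (Bpow_pos b L Hb). pose proof (Bpow_pos b p Hb).
  apply (Rmult_eq_reg_l (INR b ^ L / INR b ^ p)).
  2: { apply Rgt_not_eq. apply Rdiv_lt_0_compat; auto. }
  rewrite <- Rmult_assoc. replace (INR b ^ L / INR b ^ p * INR b ^ p) with (INR b ^ L) by (field; lra).
  replace (INR b ^ L * (1 - Zs b p W L / INR b ^ L)) with (INR b ^ L - Zs b p W L) by (field; lra).
  lra.
Qed.

Lemma ln_le_sub1 (y : R) : 0 < y -> ln y <= y - 1.
Proof.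
  intro Hy. destruct (Req_dec (ln y) 0) as [E|E].
  - rewrite E. assert (y = 1). { rewrite <- (exp_ln y Hy), E. apply exp_0. } lra.
  - pose proof (exp_ineq1 (ln y) E). rewrite exp_ln in H by auto. lra.
Qed.

Definition Lg (m : nat) : R := ln (INR (S m)) - ln (INR m).

Lemma INR_pos (m : nat) : (1 <= m)%nat -> 0 < INR m.
Proof. intro. apply lt_0_INR. lia. Qed.

Lemma Lg_upper (q : nat) : (1 <= q)%nat -> Lg q <= / INR q.
Proof.
  intro Hq. unfold Lg. pose proof (INR_pos q Hq). rewrite S_INR.
  replace (ln (INR q + 1) - ln (INR q)) with (ln ((INR q + 1) / INR q)).
  2: { unfold Rdiv. rewrite ln_mult, ln_Rinv; try lra. apply Rinv_0_lt_compat; lra. }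
  eapply Rle_trans. apply ln_le_sub1. apply Rdiv_lt_0_compat; lra.
  right. field. lra.
Qed.

Lemma Lg_lower (q : nat) : (1 <= q)%nat -> / INR (S q) <= Lg q.
Proof.
  intro Hq. unfold Lg. pose proof (INR_pos q Hq). rewrite S_INR.
  replace (ln (INR q + 1) - ln (INR q)) with (- ln (INR q / (INR q + 1))).
  2: { unfold Rdiv. rewrite ln_mult, ln_Rinv; try lra. apply Rinv_0_lt_compat; lra. }
  pose proof (ln_le_sub1 (INR q / (INR q + 1)) ltac:(apply Rdiv_lt_0_compat; lra)).
  replace (INR q / (INR q + 1) - 1) with (- / (INR q + 1)) in H0 by (field; lra). lra.
Qed.

Lemma Lg_nonneg (q : nat) : (1 <= q)%nat -> 0 <= Lg q.
Proof. intro. pose proof (Lg_lower q H). assert (0 < / INR (S q)) by (apply Rinv_0_lt_compat, INR_pos; lia). lra. Qed.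

Lemma Lg_tele (x c : nat) : sumR (fun r => Lg (x + r)) c = ln (INR (x + c)) - ln (INR x).
Proof.
  induction c; simpl sumR. rewrite Nat.add_0_r. lra.
  rewrite IHc. unfold Lg. rewrite Nat.add_succ_r. lra.
Qed.

Lemma Lg_block (q c : nat) : (1 <= q)%nat -> (1 <= c)%nat ->
  sumR (fun r => Lg (q * c + r)) c = Lg q.
Proof.
  intros Hq Hc. rewrite Lg_tele. unfold Lg.
  replace (q * c + c)%nat with (S q * c)%nat by lia.
  rewrite !mult_INR. pose proof (INR_pos q Hq). pose proof (INR_pos c Hc).
  rewrite !ln_mult; try lra. apply INR_pos; lia.
Qed.

Lemma sumR_mult_r f n c : sumR f n * c = sumR (fun i => f i * c) n.
Proof. rewrite Rmult_comm, <- sumR_scal. apply sumR_ext. intros; lra. Qed.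

Lemma sumR_rev f n : sumR (fun j => f (n - j)%nat) n = sumR (fun t => f (S t)) n.
Proof.
  induction n. reflexivity.
  rewrite sumR_shift. rewrite Nat.sub_0_r.
  rewrite (sumR_ext (fun i => f (S n - S i)%nat) (fun j => f (n - j)%nat)) by (intros; f_equal).
  rewrite IHn. simpl sumR. lra.
Qed.

Definition Bk (b p W k q : nat) : bool := ew b p W q && (occD b p W q =? k).

Definition Lam (b p W k n : nat) : R := sumR (fun q => ir (Bk b p W k q) * Lg q) (b ^ n).

Lemma F_ident (b p W k n : nat) : (2 <= b)%nat -> (1 <= k)%nat ->
  sumR (fun m => ir (k <=? occD b p W m) * Lg m) (b ^ n) = sumR (fun t => Lam b p W k (S t)) n.
Proof.
  intros Hb Hk.
  rewrite (sumR_ext _ (fun m => sumR (fun j => ir (ew b p W (m / b ^ j) && (occD b p W (m / b ^ j) =? k)) * Lg m) n)).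
  2: { intros m Hm. rewrite <- dec2 with (J := n); auto. apply sumR_mult_r. }
  rewrite sumR_swap. rewrite <- sumR_rev.
  apply sumR_ext. intros j Hj.
  unfold Lam. replace (b ^ n)%nat with (b ^ (n - j) * b ^ j)%nat.
  2: { rewrite <- Nat.pow_add_r. f_equal. lia. }
  rewrite sumR_regroup. apply sumR_ext. intros q Hq.
  assert (Hbj : (1 <= b ^ j)%nat) by (apply pow_ge1; lia).
  rewrite (sumR_ext _ (fun r => ir (Bk b p W k q) * Lg (q * b ^ j + r))).
  2: { intros r Hr. rewrite div_concat by lia. reflexivity. }
  rewrite sumR_scal. unfold Bk. destruct (ew b p W q) eqn:E.
  - rewrite Lg_block; auto. apply (ew_pos b p W); auto; lia.
  - simpl. lra.
Qed.

Definition Eprime (b p W k n : nat) : R :=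
  sumR (fun i => ir (occD b p W (b ^ n + i) <? k) * Lg (b ^ n + i)) (b ^ S n - b ^ n).

Lemma Lam_level (b p W k n : nat) : (2 <= b)%nat -> (1 <= k)%nat ->
  Lam b p W k (S n) = ln (INR b) - Eprime b p W k n.
Proof.
  intros Hb Hk.
  pose proof (F_ident b p W k (S n) Hb Hk) as H1.
  pose proof (F_ident b p W k n Hb Hk) as H0.
  simpl sumR in H1. rewrite <- H0 in H1.
  assert (Hle : (b ^ n <= b ^ S n)%nat) by (apply pow_mono; lia).
  replace (b ^ S n)%nat with (b ^ n + (b ^ S n - b ^ n))%nat in H1 at 1 by lia.
  rewrite sumR_split in H1.
  assert (E : sumR (fun i => ir (k <=? occD b p W (b ^ n + i)) * Lg (b ^ n + i)) (b ^ S n - b ^ n)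
     = ln (INR b) - Eprime b p W k n).
  { unfold Eprime.
    rewrite (sumR_ext _ (fun i => Lg (b ^ n + i) + (-1) * (ir (occD b p W (b ^ n + i) <? k) * Lg (b ^ n + i)))).
    2: { intros i _. destruct (Nat.leb_spec k (occD b p W (b ^ n + i)));
         destruct (Nat.ltb_spec (occD b p W (b ^ n + i)) k); simpl; try lia; lra. }
    rewrite sumR_plus, sumR_scal, Lg_tele.
    replace (b ^ n + (b ^ S n - b ^ n))%nat with (b ^ S n)%nat by lia.
    rewrite !pow_INR. simpl pow. rewrite ln_mult. lra. pose proof (INR_b_ge2 b Hb); lra.
    apply Bpow_pos; auto. }
  lra.
Qed.

Lemma Eprime_nonneg b p W k n : (2 <= b)%nat -> 0 <= Eprime b p W k n.
Proof.
  intro. apply sumR_nonneg. intros. apply Rmult_le_pos. apply ir_nonneg. apply Lg_nonneg.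
  pose proof (pow_ge1 b n ltac:(lia)). lia.
Qed.

Lemma Lam_0 b p W k : (1 <= b)%nat -> Lam b p W k 0 = 0.
Proof. intro. unfold Lam. simpl. unfold Bk. rewrite ew_0; auto. simpl. lra. Qed.

Lemma lnB_pos b : (2 <= b)%nat -> 0 < ln (INR b).
Proof. intro. rewrite <- ln_1. apply ln_increasing. lra. pose proof (INR_b_ge2 b H). lra. Qed.

Lemma Lam_le b p W k n : (2 <= b)%nat -> (1 <= k)%nat -> Lam b p W k n <= ln (INR b).
Proof.
  intros. destruct n. rewrite Lam_0 by lia. pose proof (lnB_pos b H). lra.
  rewrite Lam_level; auto. pose proof (Eprime_nonneg b p W k n H). lra.
Qed.

Lemma blocks_ind (b p W l : nat) : (2 <= b)%nat -> forall k m, (b ^ (k * l) <= m)%nat ->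
  ir (occD b p W m <? k) <= sumR (fun i => ir (negb (hasocc b p W l ((m / b ^ (i * l)) mod b ^ l)))) k.
Proof.
  intros Hb k. induction k as [|k IH]; intros m Hm.
  - simpl. destruct (Nat.ltb_spec (occD b p W m) 0). lia. simpl. lra.
  - rewrite sumR_shift. simpl (0 * l)%nat. rewrite Nat.pow_0_r, Nat.div_1_r.
    set (m' := (m / b ^ l)%nat).
    assert (Hbl : (1 <= b ^ l)%nat) by (apply pow_ge1; lia).
    assert (Hm' : (b ^ (k * l) <= m')%nat).
    { unfold m'. apply Nat.div_le_lower_bound. lia.
      replace (S k * l)%nat with (l + k * l)%nat in Hm by lia. rewrite Nat.pow_add_r in Hm. lia. }
    rewrite (sumR_ext (fun i => ir (negb (hasocc b p W l ((m / b ^ (S i * l)) mod b ^ l))))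
                      (fun i => ir (negb (hasocc b p W l ((m' / b ^ (i * l)) mod b ^ l))))).
    2: { intros i _. unfold m'. rewrite Nat.Div0.div_div. rewrite <- Nat.pow_add_r.
         replace (l + i * l)%nat with (S i * l)%nat by lia. reflexivity. }
    specialize (IH m' Hm').
    assert (H1 : (1 <= m')%nat) by (pose proof (pow_ge1 b (k * l) ltac:(lia)); lia).
    assert (Hr : (m mod b ^ l < b ^ l)%nat) by (apply Nat.mod_upper_bound; lia).
    pose proof (occD_mono b p W m' (m mod b ^ l) l Hb H1 Hr) as Hmono.
    replace (m' * b ^ l + m mod b ^ l)%nat with m in Hmono.
    2: { unfold m'. rewrite Nat.mul_comm. apply Nat.div_mod_eq. }
    assert (Hs : 0 <= sumR (fun i => ir (negb (hasocc b p W l ((m' / b ^ (i * l)) mod b ^ l)))) k)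
      by (apply sumR_nonneg; intros; apply ir_nonneg).
    unfold bn in Hmono.
    destruct (hasocc b p W l (m mod b ^ l)).
    + simpl negb. simpl ir at 2.
      destruct (Nat.ltb_spec (occD b p W m) (S k)); destruct (Nat.ltb_spec (occD b p W m') k);
        simpl in *; try lia; lra.
    + simpl. pose proof (ir_le1 (occD b p W m <? S k)). lra.
Qed.

Lemma count_block (f : nat -> R) (b s l N : nat) : (1 <= b)%nat -> (s + l <= N)%nat ->
  sumR (fun m => f ((m / b ^ s) mod b ^ l)%nat) (b ^ N) = INR (b ^ (N - l)) * sumR f (b ^ l).
Proof.
  intros Hb H.
  replace (b ^ N)%nat with (b ^ (N - s) * b ^ s)%nat by (rewrite <- Nat.pow_add_r; f_equal; lia).
  rewrite sumR_regroup.
  assert (Hbs : (1 <= b ^ s)%nat) by (apply pow_ge1; lia).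
  assert (Hbl : (1 <= b ^ l)%nat) by (apply pow_ge1; lia).
  rewrite (sumR_ext _ (fun q => INR (b ^ s) * f (q mod b ^ l)%nat)).
  2: { intros q _. rewrite (sumR_ext _ (fun _ => f (q mod b ^ l)%nat)). apply sumR_const.
       intros r Hr. rewrite div_concat by lia. reflexivity. }
  rewrite sumR_scal.
  replace (b ^ (N - s))%nat with (b ^ (N - s - l) * b ^ l)%nat by (rewrite <- Nat.pow_add_r; f_equal; lia).
  rewrite sumR_regroup.
  rewrite (sumR_ext _ (fun _ => sumR f (b ^ l))).
  2: { intros x _. apply sumR_ext. intros y Hy. rewrite mod_concat by lia. reflexivity. }
  rewrite sumR_const. rewrite <- Rmult_assoc, <- mult_INR, <- Nat.pow_add_r.
  replace (s + (N - s - l))%nat with (N - l)%nat by lia. reflexivity.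
Qed.

Lemma Eprime_bound (b p W k l n : nat) : (2 <= b)%nat -> (1 <= k)%nat -> (k * l <= n)%nat ->
  Eprime b p W k n <= INR k * INR b * zeta b p W l.
Proof.
  intros Hb Hk Hkl.
  set (G := fun m => sumR (fun i => ir (negb (hasocc b p W l ((m / b ^ (i * l)) mod b ^ l)))) k).
  assert (HG : forall m, 0 <= G m) by (intros; apply sumR_nonneg; intros; apply ir_nonneg).
  assert (Hbn : (1 <= b ^ n)%nat) by (apply pow_ge1; lia).
  pose proof (Bpow_pos b n Hb) as HBn.
  assert (Hle : (b ^ n <= b ^ S n)%nat) by (apply pow_mono; lia).
  apply Rle_trans with (/ INR b ^ n * sumR (fun i => G (b ^ n + i)%nat) (b ^ S n - b ^ n)).
  { unfold Eprime. rewrite <- sumR_scal. apply sumR_le. intros i Hi.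
    rewrite Rmult_comm. apply Rmult_le_compat.
    - apply Lg_nonneg. lia.
    - apply ir_nonneg.
    - eapply Rle_trans. apply Lg_upper. lia. apply Rinv_le_contravar. auto.
      rewrite <- pow_INR. apply le_INR. lia.
    - unfold G. apply blocks_ind; auto. pose proof (pow_mono b (k * l) n ltac:(lia) Hkl). lia. }
  apply Rle_trans with (/ INR b ^ n * sumR G (b ^ S n)).
  { apply Rmult_le_compat_l. left. apply Rinv_0_lt_compat; auto.
    replace (b ^ S n)%nat with (b ^ n + (b ^ S n - b ^ n))%nat at 2 by lia.
    rewrite sumR_split. assert (0 <= sumR G (b ^ n)) by (apply sumR_nonneg; auto). lra. }
  unfold G. rewrite sumR_swap.
  rewrite (sumR_ext _ (fun i => INR (b ^ (S n - l)) * Zs b p W l)).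
  2: { intros i Hi. unfold Zs. apply (count_block (fun y => ir (negb (hasocc b p W l y)))). lia.
       assert (i * l + l <= k * l)%nat by nia. lia. }
  rewrite sumR_const. unfold zeta.
  assert (Hl : (l <= n)%nat) by nia.
  rewrite pow_INR. replace (S n - l)%nat with (S (n - l)) by lia.
  assert (E : INR b ^ n = INR b ^ (n - l) * INR b ^ l) by (rewrite <- pow_add; f_equal; lia).
  rewrite E. pose proof (Bpow_pos b l Hb). pose proof (Bpow_pos b (n - l) Hb).
  simpl pow. right. field. split; lra.
Qed.

Definition gT (b p W k m : nat) : R := ir (occD b p W m =? k) * / INR m.

Definition Inner (b p W V j q : nat) : R :=
  sumR (fun r => ir (occD b p W (V * b ^ j + r) =? occD b p W V) * / INR (q * b ^ j + r)) (b ^ j).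

Lemma Pn_decomp (b p W V k n : nat) : (2 <= b)%nat -> (1 <= k)%nat -> ew b p W V = true ->
  sumR (gT b p W k) (b ^ n) =
  sumR (fun j => sumR (fun q => ir (Bk b p W k q) * Inner b p W V j q) (b ^ (n - j))) n.
Proof.
  intros Hb Hk HV. unfold gT.
  rewrite (sumR_ext _ (fun m => sumR (fun j => ir (ew b p W (m / b ^ j) && (occD b p W (m / b ^ j) =? k)
        && (occD b p W (V * b ^ j + m mod b ^ j) =? occD b p W V)) * / INR m) n)).
  2: { intros m Hm. rewrite <- (dec1 b p W V k Hb Hk HV n m Hm). apply sumR_mult_r. }
  rewrite sumR_swap. apply sumR_ext. intros j Hj.
  replace (b ^ n)%nat with (b ^ (n - j) * b ^ j)%nat by (rewrite <- Nat.pow_add_r; f_equal; lia).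
  rewrite sumR_regroup. apply sumR_ext. intros q Hq.
  assert (Hbj : (1 <= b ^ j)%nat) by (apply pow_ge1; lia).
  unfold Inner. rewrite <- sumR_scal. apply sumR_ext. intros r Hr.
  rewrite div_concat, mod_concat by lia. rewrite !ir_andb. unfold Bk. rewrite ir_andb. lra.
Qed.

Lemma Inner_bounds (b p W V j q : nat) : (2 <= b)%nat -> (1 <= q)%nat ->
  a_j b p W V j / INR b ^ j * / INR (S q) <= Inner b p W V j q <= a_j b p W V j / INR b ^ j * / INR q.
Proof.
  intros Hb Hq. unfold Inner, a_j.
  pose proof (Bpow_pos b j Hb). pose proof (INR_pos q Hq).
  assert (Hbj : (1 <= b ^ j)%nat) by (apply pow_ge1; lia).
  set (R0 := fun r => ir (occD b p W (V * b ^ j + r) =? occD b p W V)).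
  split.
  - apply Rle_trans with (sumR (fun r => R0 r * / (INR b ^ j * INR (S q))) (b ^ j)).
    + rewrite <- sumR_mult_r. right. unfold R0. rewrite Rinv_mult. unfold Rdiv. ring.
    + apply sumR_le. intros r Hr. unfold R0. apply Rmult_le_compat_l. apply ir_nonneg.
      apply Rinv_le_contravar. apply INR_pos. nia.
      rewrite <- pow_INR, <- mult_INR. apply le_INR. nia.
  - apply Rle_trans with (sumR (fun r => R0 r * / (INR b ^ j * INR q)) (b ^ j)).
    + apply sumR_le. intros r Hr. unfold R0. apply Rmult_le_compat_l. apply ir_nonneg.
      apply Rinv_le_contravar. apply Rmult_lt_0_compat; auto.
      rewrite <- pow_INR, <- mult_INR. apply le_INR. nia.
    + rewrite <- sumR_mult_r. right. unfold R0. rewrite Rinv_mult. unfold Rdiv. ring.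
Qed.

Definition Qs (b p W k n : nat) : R := sumR (fun q => ir (Bk b p W k q) * / INR q) (b ^ n).
Definition Qs' (b p W k n : nat) : R := sumR (fun q => ir (Bk b p W k q) * / INR (S q)) (b ^ n).

Lemma Bk_pos b p W k q : (1 <= b)%nat -> Bk b p W k q = true -> (1 <= q)%nat.
Proof. unfold Bk. intros Hb H. apply andb_prop in H as [H _]. eapply ew_pos; eauto. Qed.

Lemma Pn_upper (b p W V k n : nat) : (2 <= b)%nat -> (1 <= k)%nat -> ew b p W V = true ->
  sumR (gT b p W k) (b ^ n) <= cS b p W V n * Qs b p W k n.
Proof.
  intros Hb Hk HV. rewrite (Pn_decomp b p W V k n Hb Hk HV).
  unfold cS. rewrite sumR_mult_r. apply sumR_le. intros j Hj.
  unfold Qs. rewrite <- sumR_scal.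
  apply Rle_trans with (sumR (fun q => a_j b p W V j / INR b ^ j * (ir (Bk b p W k q) * / INR q)) (b ^ (n - j))).
  - apply sumR_le. intros q Hq. destruct (Bk b p W k q) eqn:E.
    + pose proof (Bk_pos b p W k q ltac:(lia) E). pose proof (Inner_bounds b p W V j q Hb H). simpl ir. lra.
    + simpl ir. rewrite !Rmult_0_l, Rmult_0_r. lra.
  - apply sumR_mono. 2: apply pow_mono; lia.
    intros q. apply Rmult_le_pos. apply Rmult_le_pos. apply a_j_nonneg. left. apply Rinv_0_lt_compat, Bpow_pos; auto.
    destruct (Bk b p W k q) eqn:E. pose proof (Bk_pos b p W k q ltac:(lia) E). simpl. rewrite Rmult_1_l.
    left. apply Rinv_0_lt_compat, INR_pos; auto. simpl. lra.
Qed.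

Lemma Pn_lower (b p W V k n' N1 : nat) : (2 <= b)%nat -> (1 <= k)%nat -> ew b p W V = true ->
  cS b p W V N1 * Qs' b p W k n' <= sumR (gT b p W k) (b ^ (N1 + n')).
Proof.
  intros Hb Hk HV. rewrite (Pn_decomp b p W V k (N1 + n') Hb Hk HV).
  assert (Hnn : forall j q, 0 <= ir (Bk b p W k q) * Inner b p W V j q).
  { intros j q. destruct (Bk b p W k q) eqn:E. pose proof (Bk_pos b p W k q ltac:(lia) E).
    pose proof (Inner_bounds b p W V j q Hb H). simpl ir.
    assert (0 <= a_j b p W V j / INR b ^ j * / INR (S q)).
    { apply Rmult_le_pos. apply Rmult_le_pos. apply a_j_nonneg. left. apply Rinv_0_lt_compat, Bpow_pos; auto.
      left. apply Rinv_0_lt_compat, INR_pos. lia. }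
    lra. simpl; lra. }
  rewrite sumR_split.
  assert (0 <= sumR (fun i => sumR (fun q => ir (Bk b p W k q) * Inner b p W V (N1 + i)%nat q) (b ^ (N1 + n' - (N1 + i)))) n').
  { apply sumR_nonneg. intros. apply sumR_nonneg. intros. apply Hnn. }
  enough (cS b p W V N1 * Qs' b p W k n' <= sumR (fun j => sumR (fun q => ir (Bk b p W k q) * Inner b p W V j q) (b ^ (N1 + n' - j))) N1) by lra.
  unfold cS. rewrite sumR_mult_r. apply sumR_le. intros j Hj.
  unfold Qs'. rewrite <- sumR_scal.
  apply Rle_trans with (sumR (fun q => ir (Bk b p W k q) * Inner b p W V j q) (b ^ n')).
  - apply sumR_le. intros q Hq. destruct (Bk b p W k q) eqn:E.
    + pose proof (Bk_pos b p W k q ltac:(lia) E). pose proof (Inner_bounds b p W V j q Hb H0). simpl ir. lra.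
    + simpl ir. rewrite !Rmult_0_l, Rmult_0_r. lra.
  - apply sumR_mono. intros; apply Hnn. apply pow_mono; lia.
Qed.

Lemma tele_bound (M N : nat) : (1 <= M)%nat ->
  sumR (fun q => ir (M <=? q) * (/ INR q - / INR (S q))) N + / INR (Nat.max N M) = / INR M.
Proof.
  intro HM. induction N.
  - simpl. lra.
  - rewrite sumR_S. destruct (Nat.leb_spec M N).
    + rewrite Nat.max_l in IHN by lia. rewrite Nat.max_l by lia. simpl ir. lra.
    + rewrite Nat.max_r in IHN by lia. rewrite Nat.max_r by lia. simpl ir. lra.
Qed.

Lemma tele_le (M N : nat) : (1 <= M)%nat ->
  sumR (fun q => ir (M <=? q) * (/ INR q - / INR (S q))) N <= / INR M.
Proof.
  intro HM. pose proof (tele_bound M N HM).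
  assert (0 < / INR (Nat.max N M)) by (apply Rinv_0_lt_compat, INR_pos; lia). lra.
Qed.

Lemma inv_diff_nonneg (q : nat) : (1 <= q)%nat -> 0 <= / INR q - / INR (S q).
Proof. intro. assert (/ INR (S q) <= / INR q). apply Rinv_le_contravar. apply INR_pos; lia.
  apply le_INR; lia. lra. Qed.

Lemma D_generic (P : nat -> bool) (t : nat -> R) (M N : nat) : (1 <= M)%nat ->
  (forall q, P q = true -> (M <= q)%nat) ->
  (forall q, (1 <= q)%nat -> 0 <= t q <= / INR q - / INR (S q)) ->
  sumR (fun q => ir (P q) * t q) N <= / INR M.
Proof.
  intros HM HP Ht. eapply Rle_trans. 2: apply (tele_le M N HM).
  apply sumR_le. intros q _. destruct (P q) eqn:E.
  - apply HP in E. destruct (Nat.leb_spec M q). 2: lia. cbn [ir]. specialize (Ht q ltac:(lia)). lra.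
  - cbn [ir]. destruct (Nat.leb_spec M q); cbn [ir]. pose proof (inv_diff_nonneg q ltac:(lia)). lra. lra.
Qed.

Lemma ind_sum_le1 (N W : nat) : sumR (fun q => ir (q =? W)) N <= 1.
Proof.
  destruct (Nat.ltb_spec W N).
  - rewrite sum_ind_eq; auto. lra.
  - rewrite (sumR_ext _ (fun _ => 0)). rewrite sumR_zero. lra.
    intros i Hi. destruct (Nat.eqb_spec i W). lia. reflexivity.
Qed.

Lemma ln2_ge : 2 / 3 <= ln 2.
Proof.
  assert (H1 : exp (1/30) <= 30/29).
  { pose proof (exp_ineq1 (-(1/30)) ltac:(lra)).
    pose proof (exp_pos (1/30)).
    assert (exp (-(1/30)) * exp (1/30) = 1) by (rewrite <- exp_plus; replace (-(1/30) + 1/30) with 0 by lra; apply exp_0).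
    nra. }
  assert (H2 : exp (2/3) = exp (1/30) ^ 20).
  { clear. replace (2/3) with (INR 20 * (1/30)) by (simpl; lra).
    generalize 20%nat. intro n. induction n. simpl. rewrite Rmult_0_l. apply exp_0.
    rewrite S_INR. replace ((INR n + 1) * (1/30)) with (INR n * (1/30) + 1/30) by lra.
    rewrite exp_plus, IHn. simpl. lra. }
  assert (H3 : exp (1/30) ^ 20 <= (30/29) ^ 20).
  { apply pow_incr. split. left. apply exp_pos. auto. }
  assert (H4 : (30/29)^20 < 2) by (simpl; lra).
  rewrite <- (ln_exp (2/3)). left. apply ln_increasing. apply exp_pos. lra.
Qed.

Lemma ln2_le : ln 2 <= 5 / 6.
Proof.
  assert (H1 : 17/12 <= exp (5/12)) by (pose proof (exp_ineq1 (5/12) ltac:(lra)); lra).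
  assert (H2 : exp (5/6) = exp (5/12) * exp (5/12)) by (rewrite <- exp_plus; f_equal; lra).
  rewrite <- (ln_exp (5/6)). left. apply ln_increasing. lra. nra.
Qed.

Lemma ln2_lt1 : ln 2 < 1.
Proof. pose proof ln2_le. lra. Qed.

Lemma occD_pos_b2 (m : nat) : (1 <= m)%nat -> (1 <= occD 2 1 1 m)%nat.
Proof.
  induction m as [m IH] using lt_wf_ind. intro Hm.
  rewrite occD_S by lia. destruct (Nat.eq_dec m 1).
  - subst. reflexivity.
  - assert (1 <= m / 2)%nat by (apply Nat.div_le_lower_bound; lia).
    specialize (IH (m / 2)%nat ltac:(apply Nat.div_lt; lia) H). lia.
Qed.

Definition dlt (b k : nat) : R := (INR b - 1) / INR b ^ (Nat.max k 2 - 1).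

Lemma Bk_lower (b p W k q : nat) : (2 <= b)%nat -> (1 <= k)%nat -> Bk b p W k q = true ->
  (b ^ (p + k - 2) <= q)%nat.
Proof.
  intros Hb Hk H. unfold Bk in H. apply andb_prop in H as [_ H]. apply Nat.eqb_eq in H.
  pose proof (occD_lower b p W Hb q (k - 1) ltac:(lia)).
  destruct p. simpl in *. replace (k - 2)%nat with (k - 1 - 1)%nat in * by lia.
  eapply Nat.le_trans; [|apply H0]. apply pow_mono; lia.
  replace (S p + k - 2)%nat with (S p - 1 + (k - 1))%nat by lia. auto.
Qed.

Lemma D_bound (b p W k N : nat) (t : nat -> R) : (2 <= b)%nat -> (1 <= p)%nat -> (1 <= k)%nat -> (W < b ^ p)%nat ->
  (forall q, (1 <= q)%nat -> 0 <= t q <= / INR q - / INR (S q)) ->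
  t 1%nat <= 1/3 ->
  sumR (fun q => ir (Bk b p W k q) * t q) N <= dlt b k.
Proof.
  intros Hb Hp Hk HW Ht Ht1.
  pose proof (INR_b_ge2 b Hb) as HB.
  unfold dlt.
  destruct (Nat.le_gt_cases 3 (p + k)) as [Hpk|Hpk].
  - eapply Rle_trans. apply (D_generic _ _ (b ^ (p + k - 2)) N).
    apply pow_ge1; lia. intros q Hq. eapply Bk_lower; eauto. auto.
    rewrite pow_INR.
    apply Rle_trans with (/ INR b ^ (Nat.max k 2 - 1)).
    + apply Rinv_le_contravar. apply Bpow_pos; auto. apply Rle_pow. lra. lia.
    + unfold Rdiv. rewrite <- (Rmult_1_l (/ INR b ^ _)) at 1. apply Rmult_le_compat_r.
      left. apply Rinv_0_lt_compat, Bpow_pos; auto. lra.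
  - assert (p = 1%nat) by lia. assert (k = 1%nat) by lia. subst.
    simpl (Nat.max 1 2 - 1)%nat. rewrite pow_1. rewrite Nat.pow_1_r in HW.
    destruct (Nat.eq_dec b 2) as [Eb|Eb]; [destruct (Nat.eq_dec W 1) as [EW|EW]|].
    + subst. apply Rle_trans with (sumR (fun q => ir (q =? 1) * t 1%nat) N).
      * apply sumR_le. intros q _. destruct (Bk 2 1 1 1 q) eqn:E.
        -- assert (q = 1%nat).
           { pose proof (Bk_pos 2 1 1 1 q ltac:(lia) E).
             destruct (Nat.eq_dec q 1). auto. exfalso.
             unfold Bk in E. apply andb_prop in E as [E1 E2]. apply Nat.eqb_eq in E2.
             rewrite occD_S in E2 by lia. rewrite E1 in E2.
             pose proof (occD_pos_b2 (q / 2) ltac:(apply Nat.div_le_lower_bound; lia)). lia. }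
           subst. simpl. lra.
        -- cbn [ir]. rewrite Rmult_0_l. apply Rmult_le_pos. apply ir_nonneg. apply Ht. lia.
      * rewrite <- sumR_mult_r. pose proof (ind_sum_le1 N 1). pose proof (Ht 1%nat ltac:(lia)).
        simpl INR. apply Rle_trans with (1 * t 1%nat). apply Rmult_le_compat_r; lra. lra.
    +
      set (fW := ir (Bk b 1 W 1 W) * t W).
      assert (HfW : 0 <= fW).
      { unfold fW. destruct (Bk b 1 W 1 W) eqn:E. pose proof (Bk_pos b 1 W 1 W ltac:(lia) E).
        pose proof (Ht W H). cbn [ir]. lra. cbn [ir]. lra. }
      apply Rle_trans with (sumR (fun q => ir (q =? W) * fW + ir (b <=? q) * (/ INR q - / INR (S q))) N).
      { apply sumR_le. intros q _. destruct (Bk b 1 W 1 q) eqn:E.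
        - pose proof (Bk_pos b 1 W 1 q ltac:(lia) E).
          destruct (Nat.leb_spec b q).
          + cbn [ir]. pose proof (Ht q H). pose proof (ir_nonneg (q =? W)). nra.
          + assert (q = W).
            { unfold Bk, ew in E. apply andb_prop in E as [E _]. apply andb_prop in E as [_ E].
              apply Nat.eqb_eq in E. rewrite Nat.pow_1_r, Nat.mod_small in E by lia. auto. }
            subst. rewrite Nat.eqb_refl. unfold fW. rewrite E. cbn [ir]. lra.
        - cbn [ir]. pose proof (ir_nonneg (q =? W)). pose proof (ir_nonneg (b <=? q)).
          destruct (Nat.leb_spec b q). pose proof (inv_diff_nonneg q ltac:(lia)). nra. cbn [ir]. nra. }
      rewrite sumR_plus. rewrite <- sumR_mult_r.
      pose proof (ind_sum_le1 N W).
      pose proof (tele_le b N ltac:(lia)).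
      assert (fW = 0).
      { unfold fW. subst. destruct W. unfold Bk. rewrite ew_0 by lia. rewrite andb_false_l. cbn [ir]. lra. lia. }
      subst. rewrite H1. simpl INR in *. lra.
    + set (fW := ir (Bk b 1 W 1 W) * t W).
      assert (HfW : 0 <= fW).
      { unfold fW. destruct (Bk b 1 W 1 W) eqn:E. pose proof (Bk_pos b 1 W 1 W ltac:(lia) E).
        pose proof (Ht W H). cbn [ir]. lra. cbn [ir]. lra. }
      apply Rle_trans with (sumR (fun q => ir (q =? W) * fW + ir (b <=? q) * (/ INR q - / INR (S q))) N).
      { apply sumR_le. intros q _. destruct (Bk b 1 W 1 q) eqn:E.
        - pose proof (Bk_pos b 1 W 1 q ltac:(lia) E).
          destruct (Nat.leb_spec b q).
          + cbn [ir]. pose proof (Ht q H). pose proof (ir_nonneg (q =? W)). nra.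
          + assert (q = W).
            { unfold Bk, ew in E. apply andb_prop in E as [E _]. apply andb_prop in E as [_ E].
              apply Nat.eqb_eq in E. rewrite Nat.pow_1_r, Nat.mod_small in E by lia. auto. }
            subst. rewrite Nat.eqb_refl. unfold fW. rewrite E. cbn [ir]. lra.
        - cbn [ir]. pose proof (ir_nonneg (q =? W)). pose proof (ir_nonneg (b <=? q)).
          destruct (Nat.leb_spec b q). pose proof (inv_diff_nonneg q ltac:(lia)). nra. cbn [ir]. nra. }
      rewrite sumR_plus. rewrite <- sumR_mult_r.
      pose proof (ind_sum_le1 N W).
      pose proof (tele_le b N ltac:(lia)).
      assert (HB3 : 3 <= INR b).
      { assert (Hb3 : (3 <= b)%nat) by lia. apply le_INR in Hb3. simpl in Hb3. lra. }
      assert (HfW1 : fW <= 1/3 /\ ((2 <= W)%nat -> fW <= 1/6)).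
      { unfold fW. destruct (Bk b 1 W 1 W) eqn:E.
        2: { cbn [ir]. lra. }
        pose proof (Bk_pos b 1 W 1 W ltac:(lia) E) as HW1. cbn [ir]. rewrite Rmult_1_l.
        destruct (Nat.eq_dec W 1). subst. split; [lra| intros; lia].
        pose proof (Ht W HW1) as HtW.
        assert (HW2 : (2 <= W)%nat) by lia. apply le_INR in HW2. simpl in HW2.
        assert (/ INR W - / INR (S W) <= 1/6).
        { rewrite S_INR.
          replace (/ INR W - / (INR W + 1)) with (/ (INR W * (INR W + 1))) by (field; lra).
          replace (1/6) with (/ 6) by lra. apply Rinv_le_contravar. lra. nra. }
        split; [lra| intros; lra]. }
      assert (Hsn : 0 <= sumR (fun q => ir (q =? W)) N) by (apply sumR_nonneg; intros; apply ir_nonneg).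
      assert (/ INR b <= 1/3) by (apply Rle_trans with (/ 3); [apply Rinv_le_contravar; lra | lra]).
      destruct (Nat.eq_dec W 0) as [EW0|EW0].
      * assert (HfW0 : fW = 0). { unfold fW. subst. unfold Bk. rewrite ew_0 by lia. rewrite andb_false_l. cbn [ir]. lra. }
        rewrite HfW0. apply Rle_trans with (/ INR b). lra.
        apply (Rmult_le_reg_l (INR b)). lra. field_simplify; lra.
      * destruct (Nat.eq_dec W 1) as [EW1|EW1].
        -- apply Rle_trans with (1/3 + / INR b). nra.
           apply (Rmult_le_reg_l (INR b)). lra.
           replace (INR b * (1/3 + / INR b)) with (INR b / 3 + 1) by (field; lra).
           replace (INR b * ((INR b - 1) / INR b)) with (INR b - 1) by (field; lra). lra.
        -- destruct HfW1 as [_ HfW2]. specialize (HfW2 ltac:(lia)).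
           apply Rle_trans with (1/6 + / INR b). nra.
           apply (Rmult_le_reg_l (INR b)). lra.
           replace (INR b * (1/6 + / INR b)) with (INR b / 6 + 1) by (field; lra).
           replace (INR b * ((INR b - 1) / INR b)) with (INR b - 1) by (field; lra). lra.
Qed.

Open Scope nat_scope.

Lemma digits_aux_fuel (b : nat) : 2 <= b -> forall f1 f2 m, m <= f1 -> m <= f2 ->
  digits_aux b f1 m = digits_aux b f2 m.
Proof.
  intros Hb f1. induction f1 as [|f1 IH]; intros f2 m H1 H2.
  - assert (m = 0) by lia. subst. destruct f2; reflexivity.
  - destruct f2 as [|f2].
    + assert (m = 0) by lia. subst. reflexivity.
    + simpl. destruct (Nat.eqb_spec m 0). reflexivity.
      f_equal. apply IH; pose proof (div_lt_self b m Hb); lia.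
Qed.

Lemma digits_S (b m : nat) : 2 <= b -> 1 <= m -> digits b m = digits b (m / b) ++ [m mod b].
Proof.
  intros Hb Hm. unfold digits at 1. destruct m as [|m']. lia.
  simpl digits_aux. f_equal. unfold digits.
  apply digits_aux_fuel; auto. pose proof (div_lt_self b (S m') Hb). lia.
Qed.

Lemma digits_0 (b : nat) : digits b 0 = [].
Proof. reflexivity. Qed.

Lemma len_digits (b : nat) : 2 <= b -> forall j m, m < b ^ j <-> length (digits b m) <= j.
Proof.
  intros Hb j. induction j as [|j IH]; intros m.
  - destruct (Nat.eq_dec m 0). subst. simpl. lia.
    rewrite digits_S by lia. rewrite length_app. simpl. lia.
  - destruct (Nat.eq_dec m 0). subst. rewrite digits_0. simpl length. split; intros; try lia. pose proof (pow_ge1 b (S j) ltac:(lia)). lia.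
    rewrite digits_S by lia. rewrite length_app. simpl length.
    specialize (IH (m / b)).
    assert (m < b ^ S j <-> m / b < b ^ j).
    { rewrite Nat.pow_succ_r by lia. split; intro H.
      - apply Nat.Div0.div_lt_upper_bound. lia.
      - pose proof (Nat.div_mod_eq m b). pose proof (Nat.mod_upper_bound m b ltac:(lia)). nia. }
    rewrite H, IH. lia.
Qed.

Fixpoint pad (b j x : nat) : list nat :=
  match j with O => [] | S j' => pad b j' (x / b) ++ [x mod b] end.

Lemma pad_S b j x : pad b (S j) x = pad b j (x / b) ++ [x mod b].
Proof. reflexivity. Qed.

Definition valw (b : nat) (w : list nat) : nat := fold_left (fun acc d => acc * b + d) w 0.

Lemma valw_snoc b l d : valw b (l ++ [d]) = valw b l * b + d.
Proof. unfold valw. rewrite fold_left_app. reflexivity. Qed.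

Lemma length_pad b j x : length (pad b j x) = j.
Proof. revert x. induction j; intros; simpl; auto. rewrite length_app, IHj. simpl. lia. Qed.

Lemma valw_pad b j x : 1 <= b -> valw b (pad b j x) = x mod b ^ j.
Proof.
  intro Hb. revert x. induction j; intros x; simpl pad.
  - rewrite Nat.pow_0_r, Nat.mod_1_r. reflexivity.
  - rewrite valw_snoc, IHj. rewrite Nat.pow_succ_r by lia.
    rewrite Nat.Div0.mod_mul_r. lia.
Qed.

Lemma pad_valw b w : 1 <= b -> List.Forall (fun d => d < b) w -> pad b (length w) (valw b w) = w.
Proof.
  intros Hb. induction w as [|d w IH] using rev_ind; intros H. reflexivity.
  apply Forall_app in H as [H1 H2]. apply Forall_inv in H2.
  rewrite length_app. simpl length. rewrite Nat.add_1_r. simpl pad.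
  rewrite valw_snoc. rewrite (proj1 (divmod_eq b (valw b w) d H2)), (proj2 (divmod_eq b (valw b w) d H2)).
  rewrite IH; auto.
Qed.

Lemma valw_lt b w : 1 <= b -> List.Forall (fun d => d < b) w -> valw b w < b ^ length w.
Proof.
  intros Hb H. rewrite <- (pad_valw b w Hb H) at 1. rewrite valw_pad by auto.
  apply Nat.mod_upper_bound. pose proof (pow_ge1 b (length w) Hb). lia.
Qed.

Lemma lastn_digits (b : nat) : 2 <= b -> forall m j, j <= length (digits b m) ->
  skipn (length (digits b m) - j) (digits b m) = pad b j (m mod b ^ j).
Proof.
  intros Hb m. induction m as [m IH] using lt_wf_ind. intros j Hj.
  destruct (Nat.eq_dec m 0).
  - subst. simpl in Hj. assert (j = 0) by lia. subst. reflexivity.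
  - destruct j as [|j].
    + rewrite Nat.sub_0_r. apply skipn_all2. lia.
    + rewrite digits_S in * by lia. rewrite length_app in *. simpl length in *.
      rewrite skipn_app.
      replace (length (digits b (m / b)) + 1 - S j - length (digits b (m / b))) with 0 by lia.
      replace (length (digits b (m / b)) + 1 - S j) with (length (digits b (m / b)) - j) by lia.
      rewrite IH; auto. 2: apply div_lt_self; lia. 2: lia.
      rewrite pad_S. rewrite mod_S_div, mod_S_mod by lia. reflexivity.
Qed.

Definition ewL (w X : list nat) : bool :=
  (length w <=? length X) && (if list_eq_dec Nat.eq_dec (skipn (length X - length w) X) w then true else false).

Lemma occ_nil w : 1 <= length w -> occ [] w = 0.
Proof. intro. unfold occ. simpl length. destruct (length w) eqn:E. lia. reflexivity. Qed.

Lemma occ_snoc X d w : 1 <= length w -> occ (X ++ [d]) w = occ X w + (if ewL w (X ++ [d]) then 1 else 0).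
Proof.
  intro Hp. unfold occ, ewL. rewrite length_app. simpl length.
  set (p := length w).
  destruct (Nat.le_gt_cases p (length X + 1)) as [H|H].
  - replace (length X + 1 + 1 - p) with (S (length X + 1 - p)) by lia.
    rewrite seq_S, filter_app, length_app. simpl (0 + _).
    f_equal.
    + f_equal. apply filter_ext_in. intros i Hi. apply in_seq in Hi.
      rewrite skipn_app. replace (i - length X) with 0 by lia. simpl skipn at 2.
      assert (E : firstn p (skipn i X ++ [d]) = firstn p (skipn i X)).
      { rewrite firstn_app. rewrite length_skipn. replace (p - (length X - i)) with 0 by lia.
        simpl firstn. apply app_nil_r. }
      destruct (list_eq_dec Nat.eq_dec (firstn p (skipn i X ++ [d])) w);
      destruct (list_eq_dec Nat.eq_dec (firstn p (skipn i X)) w); auto; congruence.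
    + assert (Hl : p <=? length X + 1 = true) by (apply Nat.leb_le; lia). rewrite Hl. simpl andb.
      assert (E : firstn p (skipn (length X + 1 - p) (X ++ [d])) = skipn (length X + 1 - p) (X ++ [d])).
      { apply firstn_all2. rewrite length_skipn, length_app. simpl. lia. }
      simpl filter.
      destruct (list_eq_dec Nat.eq_dec (firstn p (skipn (length X + 1 - p) (X ++ [d]))) w);
      destruct (list_eq_dec Nat.eq_dec (skipn (length X + 1 - p) (X ++ [d])) w); simpl; auto; congruence.
  - replace (length X + 1 + 1 - p) with 0 by lia. replace (length X + 1 - p) with 0 by lia.
    simpl. assert (Hl : p <=? length X + 1 = false) by (apply Nat.leb_gt; lia). rewrite Hl. reflexivity.
Qed.

Lemma ewL_digits (b : nat) (w : list nat) (m : nat) : 2 <= b -> 1 <= length w -> List.Forall (fun d => d < b) w -> 1 <= m ->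
  ewL w (digits b m) = ew b (length w) (valw b w) m.
Proof.
  intros Hb Hp Hw Hm. unfold ewL, ew.
  set (p := length w).
  assert (E1 : (p <=? length (digits b m)) = (b ^ (p - 1) <=? m)).
  { pose proof (len_digits b Hb (p - 1) m).
    destruct (Nat.leb_spec p (length (digits b m))); destruct (Nat.leb_spec (b ^ (p - 1)) m); auto; lia. }
  rewrite E1. destruct (Nat.leb_spec (b ^ (p - 1)) m) as [H|H]; simpl andb; auto.
  assert (Hl : p <= length (digits b m)) by (pose proof (len_digits b Hb (p - 1) m); lia).
  rewrite lastn_digits by auto.
  assert (Hbp : 1 <= b ^ p) by (apply pow_ge1; lia).
  destruct (list_eq_dec Nat.eq_dec (pad b p (m mod b ^ p)) w) as [E|E].
  - symmetry. apply Nat.eqb_eq. rewrite <- (Nat.mod_small (m mod b ^ p) (b ^ p)) by (apply Nat.mod_upper_bound; lia).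
    rewrite <- valw_pad by lia. rewrite E. reflexivity.
  - symmetry. apply Nat.eqb_neq. intro E2. apply E. rewrite E2. unfold p. apply pad_valw; auto. lia.
Qed.

Lemma occ_digits (b : nat) (w : list nat) : 2 <= b -> 1 <= length w -> List.Forall (fun d => d < b) w ->
  forall m, occ (digits b m) w = occD b (length w) (valw b w) m.
Proof.
  intros Hb Hp Hw m. induction m as [m IH] using lt_wf_ind.
  destruct (Nat.eq_dec m 0).
  - subst. rewrite digits_0, occ_nil, occD_0; auto.
  - rewrite digits_S by lia. rewrite occ_snoc by auto. rewrite <- digits_S by lia.
    rewrite ewL_digits by (auto; lia). rewrite occD_S by lia. rewrite IH. reflexivity.
    apply div_lt_self; lia.
Qed.

Open Scope R_scope.

Lemma sum_f_R0_sumR f N : sum_f_R0 f N = sumR f (S N).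
Proof. induction N; simpl. lra. rewrite IHN. simpl. lra. Qed.

Lemma gT_nonneg b p W k m : 0 <= gT b p W k m.
Proof.
  unfold gT. destruct (occD b p W m =? k); cbn [ir]. 2: lra.
  destruct m. simpl. rewrite Rinv_0. lra. left. rewrite Rmult_1_l. apply Rinv_0_lt_compat, INR_pos; lia.
Qed.

Lemma gT_0 b p W k : (1 <= k)%nat -> gT b p W k 0 = 0.
Proof. intro. unfold gT. rewrite occD_0. destruct k. lia. simpl. lra. Qed.

Lemma Lg_1 : Lg 1 = ln 2.
Proof. unfold Lg. simpl INR. rewrite ln_1. replace (1 + 1) with 2 by lra. lra. Qed.


Lemma Pn_le_U (b p W V k n : nat) : (2 <= b)%nat -> (1 <= p)%nat -> (1 <= k)%nat -> (W < b ^ p)%nat ->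
  ew b p W V = true ->
  sumR (gT b p W k) (b ^ n) <= INR b ^ p * (ln (INR b) + dlt b k).
Proof.
  intros Hb Hp Hk HW HV.
  eapply Rle_trans. apply (Pn_upper b p W V k n); auto.
  assert (HQ : Qs b p W k n = Lam b p W k n + sumR (fun q => ir (Bk b p W k q) * (/ INR q - Lg q)) (b ^ n)).
  { unfold Qs, Lam. rewrite <- sumR_plus. apply sumR_ext. intros. lra. }
  assert (HD : sumR (fun q => ir (Bk b p W k q) * (/ INR q - Lg q)) (b ^ n) <= dlt b k).
  { apply D_bound; auto.
    - intros q Hq. pose proof (Lg_upper q Hq). pose proof (Lg_lower q Hq). lra.
    - rewrite Lg_1. simpl INR. pose proof ln2_ge. lra. }
  assert (HQ0 : 0 <= Qs b p W k n).
  { apply sumR_nonneg. intros q _. destruct (Bk b p W k q) eqn:E; cbn [ir]. 2: lra.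
    pose proof (Bk_pos b p W k q ltac:(lia) E). rewrite Rmult_1_l. left. apply Rinv_0_lt_compat, INR_pos; auto. }
  rewrite (Kac_c b p W V n) by auto.
  pose proof (zeta_nonneg b p W (n + p - 1) Hb). pose proof (Bpow_pos b p Hb).
  pose proof (Lam_le b p W k n Hb Hk).
  apply Rle_trans with (INR b ^ p * Qs b p W k n).
  - rewrite Rmult_assoc. apply Rmult_le_compat_l. lra. nra.
  - apply Rmult_le_compat_l. lra. lra.
Qed.

Lemma lt_pow (b n : nat) : (2 <= b)%nat -> (n < b ^ n)%nat.
Proof. intro. apply Nat.pow_gt_lin_r. lia. Qed.

Theorem theorem1 (b : nat) (w : list nat) (k : nat) :
  (2 <= b)%nat -> (1 <= length w)%nat -> List.Forall (fun d => (d < b)%nat) w ->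
  (1 <= k)%nat ->
  exists S : R, is_series (S_term b w k) S /\
    Rabs (S - INR b ^ length w * ln (INR b))
      <= (INR b - 1) * powerRZ (INR b) (Z.of_nat (length w) - Z.of_nat (Nat.max k 2) + 1)%Z.
Proof.
  intros Hb Hp Hw Hk.
  set (p := length w) in *. set (W := valw b w).
  assert (HW : (W < b ^ p)%nat) by (apply valw_lt; auto; lia).
  set (V := (b ^ p + W)%nat).
  assert (HV : ew b p W V = true).
  { unfold ew, V. apply andb_true_intro. split.
    - apply Nat.leb_le. pose proof (pow_mono b (p - 1) p ltac:(lia) ltac:(lia)). lia.
    - apply Nat.eqb_eq. pose proof (mod_concat b 1 W p ltac:(lia) HW). rewrite Nat.mul_1_l in H. auto. }
  assert (Hterm : forall n, S_term b w k n = gT b p W k (S n)).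
  { intro n. unfold S_term, gT. rewrite occ_digits by auto. fold p W.
    destruct (occD b p W (S n) =? k); cbn [ir]; lra. }
  set (u := fun N => sum_f_R0 (S_term b w k) N).
  assert (Hu : forall N, u N = sumR (gT b p W k) (S (S N))).
  { intro N. unfold u. rewrite sum_f_R0_sumR.
    rewrite (sumR_ext _ (fun i => gT b p W k (S i))) by (intros; apply Hterm).
    rewrite (sumR_shift (gT b p W k) (S N)). rewrite gT_0 by auto. lra. }
  set (U := INR b ^ p * (ln (INR b) + dlt b k)).
  assert (HuU : forall N, u N <= U).
  { intro N. rewrite Hu. eapply Rle_trans.
    apply (sumR_mono (gT b p W k) (S (S N)) (b ^ S (S N))). apply gT_nonneg.
    apply Nat.lt_le_incl, lt_pow; auto.
    apply (Pn_le_U b p W V k); auto. }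
  assert (Hgrow : Un_growing u).
  { intro N. unfold u. simpl sum_f_R0. rewrite Hterm. pose proof (gT_nonneg b p W k (S (S N))). lra. }
  destruct (growing_cv u Hgrow) as [l Hl].
  { exists U. intros x [N HN]. subst. apply HuU. }
  exists l. split.
  { apply is_series_Reals. exact Hl. }
  pose proof (Bpow_pos b p Hb) as HBp.
  pose proof (INR_b_ge2 b Hb) as HB.
  pose proof (lnB_pos b Hb) as HlnB.
  assert (Hlu : l <= U).
  { destruct (Rle_dec l U) as [H|H]. auto. exfalso.
    destruct (Hl (l - U) ltac:(lra)) as [N HN]. specialize (HN N ltac:(lia)).
    specialize (HuU N). unfold Rdist in HN. rewrite Rabs_left1 in HN by lra. lra. }
  assert (Hdlt0 : 0 <= dlt b k).
  { unfold dlt. apply Rmult_le_pos. lra. left. apply Rinv_0_lt_compat, Bpow_pos; auto. }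
  assert (Hlow : forall eta, 0 < eta -> INR b ^ p * (ln (INR b) - dlt b k) - eta <= l).
  { intros eta Heta.
    destruct (zeta_small b p W Hb Hp HW (eta / (2 * INR b ^ p * ln (INR b)))) as [L1 HL1].
    { apply Rdiv_lt_0_compat. lra. nra. }
    destruct (zeta_small b p W Hb Hp HW (eta / (2 * INR b ^ p * INR k * INR b))) as [L2 HL2].
    { apply Rdiv_lt_0_compat. lra. assert (1 <= INR k) by (apply (le_INR 1); auto).
      repeat apply Rmult_lt_0_compat; lra. }
    set (n' := S (k * L2)). set (N1 := L1).
    set (N := (b ^ (N1 + n'))%nat).
    pose proof (growing_ineq u l Hgrow Hl N) as HuN.
    rewrite Hu in HuN.
    assert (H1 : sumR (gT b p W k) (b ^ (N1 + n')) <= sumR (gT b p W k) (S (S N))).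
    { apply sumR_mono. apply gT_nonneg. unfold N. lia. }
    pose proof (Pn_lower b p W V k n' N1 Hb Hk HV) as H2.
    rewrite (Kac_c b p W V N1) in H2 by auto.
    specialize (HL1 (N1 + p - 1)%nat ltac:(unfold N1; lia)).
    pose proof (zeta_nonneg b p W (N1 + p - 1) Hb).
    set (z1 := zeta b p W (N1 + p - 1)) in *.
    assert (HQ' : Qs' b p W k n' = Lam b p W k n' - sumR (fun q => ir (Bk b p W k q) * (Lg q - / INR (S q))) (b ^ n')).
    { unfold Qs', Lam. rewrite <- (Rplus_0_r (sumR _ (b ^ n'))).
      rewrite <- (sumR_zero (b ^ n')). rewrite <- sumR_plus.
      rewrite (sumR_ext _ (fun q => ir (Bk b p W k q) * Lg q + (-1) * (ir (Bk b p W k q) * (Lg q - / INR (S q))))).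
      rewrite sumR_plus, sumR_scal. lra. intros. lra. }
    assert (HD2 : sumR (fun q => ir (Bk b p W k q) * (Lg q - / INR (S q))) (b ^ n') <= dlt b k).
    { apply D_bound; auto.
      - intros q Hq. pose proof (Lg_upper q Hq). pose proof (Lg_lower q Hq). lra.
      - rewrite Lg_1. simpl INR. pose proof ln2_le. lra. }
    assert (HD2' : 0 <= sumR (fun q => ir (Bk b p W k q) * (Lg q - / INR (S q))) (b ^ n')).
    { apply sumR_nonneg. intros q _. destruct (Bk b p W k q) eqn:E; cbn [ir]. 2: lra.
      pose proof (Bk_pos b p W k q ltac:(lia) E) as Hq1. pose proof (Lg_lower q Hq1). lra. }
    assert (HLam : ln (INR b) - INR k * INR b * zeta b p W L2 <= Lam b p W k n').
    { unfold n'. rewrite Lam_level by auto. pose proof (Eprime_bound b p W k L2 (k * L2) Hb Hk ltac:(lia)). lra. }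
    specialize (HL2 L2 ltac:(lia)).
    pose proof (zeta_nonneg b p W L2 Hb).
    assert (HLam2 : Lam b p W k n' <= ln (INR b)) by (apply Lam_le; auto).
    set (Q := Qs' b p W k n') in *.
    set (z2 := zeta b p W L2) in *.
    assert (Hk1 : 1 <= INR k) by (apply (le_INR 1); auto).
    assert (HQlow : ln (INR b) - dlt b k - INR k * INR b * z2 <= Q) by lra.
    assert (HQup : Q <= ln (INR b)) by lra.
    assert (HQ0 : 0 <= Q).
    { unfold Q, Qs'. apply sumR_nonneg. intros q _. destruct (Bk b p W k q) eqn:E; cbn [ir]. 2: lra.
      rewrite Rmult_1_l. left. apply Rinv_0_lt_compat, INR_pos. lia. }
    assert (Hz1 : INR b ^ p * z1 * ln (INR b) <= eta / 2).
    { apply Rle_trans with (INR b ^ p * (eta / (2 * INR b ^ p * ln (INR b))) * ln (INR b)).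
      apply Rmult_le_compat_r. lra. apply Rmult_le_compat_l; lra. right. field. split; lra. }
    assert (Hz2 : INR b ^ p * (INR k * INR b * z2) <= eta / 2).
    { apply Rle_trans with (INR b ^ p * (INR k * INR b * (eta / (2 * INR b ^ p * INR k * INR b)))).
      apply Rmult_le_compat_l. lra. apply Rmult_le_compat_l. nra. auto. right. field. split; lra. }
    assert (HzQ : z1 * Q <= z1 * ln (INR b)) by (apply Rmult_le_compat_l; lra).
    nra. }
  assert (HlT : INR b ^ p * (ln (INR b) - dlt b k) <= l).
  { destruct (Rle_dec (INR b ^ p * (ln (INR b) - dlt b k)) l) as [H|H]. auto. exfalso.
    specialize (Hlow ((INR b ^ p * (ln (INR b) - dlt b k) - l) / 2) ltac:(lra)). lra. }
  assert (Hpow : INR b ^ p * dlt b k = (INR b - 1) * powerRZ (INR b) (Z.of_nat p - Z.of_nat (Nat.max k 2) + 1)).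
  { unfold dlt. set (e := (Nat.max k 2 - 1)%nat).
    replace (Z.of_nat p - Z.of_nat (Nat.max k 2) + 1)%Z with (Z.of_nat p - Z.of_nat e)%Z by (unfold e; lia).
    assert (E : powerRZ (INR b) (Z.of_nat p - Z.of_nat e) * INR b ^ e = INR b ^ p).
    { rewrite !pow_powerRZ. rewrite <- powerRZ_add by lra. f_equal. lia. }
    pose proof (Bpow_pos b e Hb). rewrite <- E. field. lra. }
  rewrite <- Hpow. unfold U in Hlu. apply Rabs_le. split; nra.
Qed.
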